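(* Let $Y$ be a Young diagram with row lengths $a_1\ge a_2\ge\cdots\ge a_m\ge 0$ and size $|Y|=\sum_{i=1}^m a_i$. If $Y$ is wide, then $\tau^{(2)}(H(Y))=|Y|$.
   Context: A Young diagram with row lengths $a_1\ge\cdots\ge a_m\ge 0$ represents the partition $|Y|=a_1+\cdots+a_m$; its $i$th row $r_i$ has $a_i$ left-aligned squares. Its conjugate $Y'$ is the diagram whose row lengths are the column lengths $b_j=|\{i: a_i\ge j\}|$ of $Y$. A diagram $X$ dominates a diagram $Z$ of the same size if $\sum_{i=1}^k a_i(X)\ge \sum_{i=1}^k a_i(Z)$ for every $k\ge1$ (padding with zero parts). $Y$ is wide if for every subset of its rows, the Young diagram $Z$ formed by those rows dominates its conjugate $Z'$. The tripartite 3-uniform hypergraph $H(Y)$ has vertex sides $R=\{r_1,\dots,r_m\}$, $C=\{c_1,\dots,c_{a_1}\}$, $S=\{s_1,\dots,s_{a_1}\}$ and edge set $\bigcup_{i=1}^m H_i$, where $H_i=\{\{r_i,c_j,s_k\}: 1\le j,k\le a_i\}$. A 2-cover of a hypergraph $H$ is a set $P$ of 2-element vertex sets, each contained in some edge of $H$, such that every edge of $H$ contains some member of $P$; $\tau^{(2)}(H)$ is the minimum size of a 2-cover. *)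

(* Defs.v *)
From mathcomp Require Import all_boot.
Set Implicit Arguments. Unset Strict Implicit. Unset Printing Implicit Defensive.

Definition young (a : seq nat) : bool := sorted (fun x y => y <= x) a.

Definition ysize (a : seq nat) : nat := sumn a.

(* a_1 (= 0 for the empty diagram); for a Young diagram this is the max row length. *)
Definition width (a : seq nat) : nat := head 0 a.

Definition conjugate (a : seq nat) : seq nat :=
  [seq count (fun x => j.+1 <= x) a | j <- iota 0 (foldr maxn 0 a)].

(* X dominates Z (same size; partial sums, padding with zeros via take) *)
Definition dominates (X Z : seq nat) : Prop :=
  sumn X = sumn Z /\ forall k, 1 <= k -> sumn (take k Z) <= sumn (take k X).

Definition wide (a : seq nat) : Prop :=
  forall msk : bitseq, dominates (mask msk a) (conjugate (mask msk a)).

(* vertices of H(Y): R = 'I_m, C = 'I_n, S = 'I_n (0-based), n = a_1 *)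
Definition vert (m n : nat) : finType := (('I_m + 'I_n) + 'I_n)%type.

Definition rv {m n} (i : 'I_m) : vert m n := inl (inl i).
Definition cv {m n} (j : 'I_n) : vert m n := inl (inr j).
Definition sv {m n} (k : 'I_n) : vert m n := inr k.

(* H_i = {{r_i,c_j,s_k} : j,k <= a_i} (0-based: j,k < a_i) *)
Definition Hi (a : seq nat) (i : 'I_(size a)) : {set {set vert (size a) (width a)}} :=
  [set [set rv i; cv jk.1; sv jk.2] | jk in [set jk : 'I_(width a) * 'I_(width a)
     | (jk.1 < nth 0 a i) && (jk.2 < nth 0 a i)]].

Definition HY (a : seq nat) : {set {set vert (size a) (width a)}} :=
  \bigcup_(i < size a) Hi i.

Definition is_2cover (V : finType) (H : {set {set V}}) (P : {set {set V}}) : Prop :=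
  (forall p, p \in P -> #|p| = 2 /\ exists2 e, e \in H & p \subset e) /\
  (forall e, e \in H -> exists2 p, p \in P & p \subset e).

Definition tau2_is (V : finType) (H : {set {set V}}) (t : nat) : Prop :=
  (exists P, is_2cover H P /\ #|P| = t) /\
  (forall P, is_2cover H P -> t <= #|P|).

(* Main.v *)
Require Import Defs.
From mathcomp Require Import all_boot zify.
Set Implicit Arguments. Unset Strict Implicit. Unset Printing Implicit Defensive.

Section Wide.
Variable I : finType.

Definition WideOn (A : {set I}) (b : I -> nat) : Prop :=
  forall X : {set I}, X \subset A -> forall k,
    exists2 T : {set I}, (T \subset X) && (#|T| <= k) &
      \sum_(i in X) minn (b i) k <= \sum_(i in T) b i.

Lemma wideOn_sub (A A' : {set I}) b : WideOn A b -> A' \subset A -> WideOn A' b.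
Proof. move=> HW HA X HX k; apply: HW; exact: subset_trans HX HA. Qed.

Lemma swap_lemma (b : I -> nat) (X T0 : {set I}) w K :
  w \notin X -> T0 \subset w |: X -> #|T0| <= K -> K <= #|X| ->
  (forall x, x \in X -> b w <= b x) ->
  exists2 T : {set I}, (T \subset X) && (#|T| <= K) &
    \sum_(i in T0) b i <= \sum_(i in T) b i.
Proof.
move=> wX sT0 cT0 KX bw.
case: (boolP (w \in T0)) => wT0; last first.
  exists T0 => //; apply/andP; split=> //.
  apply/subsetP=> x xT0; have := subsetP sT0 x xT0; rewrite in_setU1.
  by case/orP=> // /eqP xw; rewrite -xw xT0 in wT0.
have sT1 : T0 :\ w \subset X.
  apply/subsetP => x; rewrite in_setD1 => /andP[xw xT0].
  by have := subsetP sT0 x xT0; rewrite in_setU1 (negbTE xw).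
have cT1 : #|T0 :\ w| < K by have := cardsD1 w T0; rewrite wT0; lia.
have : ~~ (X \subset T0 :\ w) by apply/negP => /subset_leq_card; lia.
case/subsetPn => t tX tT1.
exists (t |: (T0 :\ w)).
  apply/andP; split.
    by apply/subsetP => x; rewrite in_setU1 => /orP[/eqP -> //|]; apply: (subsetP sT1).
  by rewrite cardsU1 tT1; lia.
rewrite (big_setD1 _ wT0) /= big_setU1 //=.
by rewrite leq_add2r; apply: bw.
Qed.

Lemma topk (c : I -> nat) (T : {set I}) k :
  exists2 T2 : {set I}, (T2 \subset T) && (#|T2| == minn k #|T|) &
    #|T2| * \sum_(i in T) c i <= #|T| * \sum_(i in T2) c i.
Proof.
move: {2}#|T| (leqnn #|T|) => N; elim: N T => [|N IH] T cT.
  exists T; first by rewrite subxx /=; apply/eqP; lia.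
  by rewrite mulnC.
case: (leqP #|T| k) => hk.
  exists T; first by rewrite subxx /=; apply/eqP; lia.
  by rewrite mulnC.
have T0 : 0 < #|T| by lia.
case/card_gt0P: T0 => x0 x0T.
pose u := [arg min_(i < x0 in T) c i].
have [uT umin] : u \in T /\ forall j, j \in T -> c u <= c j.
  by rewrite /u; case: arg_minnP => // v vT vmin; split.
have cT1 : #|T :\ u| <= N by have := cardsD1 u T; rewrite uT; lia.
have [T2 /andP[sT2 /eqP cT2] Hav] := IH (T :\ u) cT1.
have cTu : #|T| = #|T :\ u| + 1 by have := cardsD1 u T; rewrite uT; lia.
exists T2.
  apply/andP; split; first by apply: subset_trans sT2 (subD1set _ _).
  apply/eqP; rewrite cT2; lia.
have hk2 : #|T2| = k by lia.
have Hmin : k * c u <= \sum_(i in T2) c i.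
  rewrite -hk2 -sum_nat_const; apply: leq_sum => i iT2.
  by apply: umin; have := subsetP sT2 i iT2; rewrite in_setD1 => /andP[].
rewrite (big_setD1 _ uT) /= cTu.
move: Hav Hmin; rewrite hk2; set s1 := \sum_(i in T :\ u) c i; set s2 := \sum_(i in T2) c i.
nia.
Qed.

Lemma sum_sub_le (T B : {set I}) (d : I -> nat) : T \subset B -> \sum_(i in T) d i <= \sum_(i in B) d i.
Proof. move=> sTB. rewrite [X in _ <= X](big_setID T) /= (setIidPr sTB). exact: leq_addr. Qed.

Lemma sum_minn_le (X : {set I}) (c : I -> nat) k :
  \sum_(i in X) minn (c i) k <= #|X| * k.
Proof.
rewrite -sum_nat_const; apply: leq_sum => i _; exact: geq_minr.
Qed.

Lemma any_wide (A : {set I}) (b d : I -> nat) w :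
  WideOn A b -> w \in A -> (forall l, l \in A -> b w <= b l) ->
  (forall l, d l <= b l) -> \sum_(l in A :\ w) d l <= b w ->
  WideOn (A :\ w) (fun l => b l - d l).
Proof.
move=> HW wA bmin db dsum X sX k.
pose c := fun l => b l - d l.
change (exists2 T : {set I}, (T \subset X) && (#|T| <= k) &
      \sum_(i in X) minn (c i) k <= \sum_(i in T) c i).
have wX : w \notin X by apply/negP => /(subsetP sX); rewrite in_setD1 eqxx.
have XA : X \subset A by apply: subset_trans sX (subD1set _ _).
have bX : forall x, x \in X -> b w <= b x by move=> x /(subsetP XA); apply: bmin.
have sumd : forall T : {set I}, T \subset X -> \sum_(i in T) d i <= b w.
  move=> T sT; apply: leq_trans dsum; apply: sum_sub_le; exact: subset_trans sT sX.
have csum : forall T : {set I}, \sum_(i in T) c i + \sum_(i in T) d i = \sum_(i in T) b i.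
  by move=> T; rewrite -big_split /=; apply: eq_bigr => i _; rewrite /c subnK.
have cminle : \sum_(i in X) minn (c i) k <= \sum_(i in X) minn (b i) k.
  by apply: leq_sum => i _; rewrite /c; lia.
case: (leqP #|X| k) => hXk.
  exists X; first by rewrite subxx.
  by apply: leq_sum => i _; exact: geq_minl.
have wXA : w |: X \subset A by rewrite subUset sub1set wA XA.
case: (leqP (b w) k) => hsk.
  have [T0 /andP[sT0 cT0] H0] := HW _ wXA k.
  have [T /andP[sT cT] HT] := swap_lemma wX sT0 cT0 (ltnW hXk) bX.
  exists T; first by rewrite sT cT.
  move: H0; rewrite big_setU1 //= => H0.
  have := sumd T sT; have := csum T; move: cminle HT H0.
  rewrite (minn_idPl hsk); lia.
have bXk : forall x, x \in X -> k < b x by move=> x /bX; lia.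
case: (leqP (b w) #|X|) => hsn.
  have [T0 /andP[sT0 cT0] H0] := HW _ wXA (b w).
  have [T /andP[sT cT] HT] := swap_lemma wX sT0 cT0 hsn bX.
  have Hmins : \sum_(i in w |: X) minn (b i) (b w) = (#|X| + 1) * b w.
    rewrite big_setU1 //= minnn.
    have -> : \sum_(i in X) minn (b i) (b w) = \sum_(i in X) b w.
      by apply: eq_bigr => i /bX /minn_idPr.
    by rewrite sum_nat_const; lia.
  have HTc : #|X| * b w <= \sum_(i in T) c i.
    have := sumd T sT; have := csum T; move: HT H0; rewrite Hmins; lia.
  have [T2 /andP[sT2 /eqP cT2] Hav] := topk c T k.
  exists T2.
    by rewrite (subset_trans sT2 sT) cT2 geq_minl.
  apply: leq_trans (sum_minn_le _ _ _) _.
  case: (leqP #|T| k) => hTk.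
    have eT : #|T2| = #|T| by lia.
    have e2 : T2 = T by apply/eqP; rewrite eqEcard sT2 eT leqnn.
    rewrite e2; apply: (leq_trans _ HTc); rewrite leq_mul2l; apply/orP; right; exact: ltnW.
  have eT : #|T2| = k by lia.
  rewrite eT in Hav.
  move: Hav HTc; set S2 := \sum_(i in T2) c i; set ST := \sum_(i in T) c i.
  move=> Hav HTc.
  have h1 : k * (#|X| * b w) <= k * ST by rewrite leq_mul2l HTc orbT.
  have h2 : #|T| * S2 <= b w * S2 by rewrite leq_mul2r cT orbT.
  have h : b w * (#|X| * k) <= b w * S2.
    apply: leq_trans h2; apply: leq_trans Hav; apply: leq_trans h1.
    nia.
  by rewrite leq_pmul2l in h; [exact: h| lia].
have [T2 /andP[sT2 /eqP cT2] Hav] := topk c X k.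
exists T2; first by rewrite sT2 cT2 geq_minl.
apply: leq_trans (sum_minn_le _ _ _) _.
have eT : #|T2| = k by lia.
rewrite eT in Hav.
have HXb : #|X| * b w <= \sum_(i in X) b i.
  by rewrite -sum_nat_const; apply: leq_sum => i /bX.
have := sumd X (subxx X); have := csum X; move: HXb Hav.
set S2 := \sum_(i in T2) c i; set SX := \sum_(i in X) c i; set SD := \sum_(i in X) d i; set SB := \sum_(i in X) b i.
move=> HXb Hav h1 h2.
have hX : #|X| * SX >= #|X| * (#|X| * b w - b w) by rewrite leq_mul2l; lia.
nia.
Qed.

End Wide.


Definition GCinst (I C S : finType) (A : {set I}) (b : I -> nat)
  (X : I -> {set C}) (Y : I -> {set S}) (Q : {set C * S}) : Prop :=
  [/\ (forall l, l \in A -> #|X l| <= b l /\ #|Y l| <= b l),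
      (forall l j k, l \in A -> j \in X l -> k \in Y l -> (j,k) \in Q) &
      WideOn A b].

Definition GC_upto (n : nat) : Prop :=
  forall (I C S : finType) (A : {set I}) (b : I -> nat)
    (X : I -> {set C}) (Y : I -> {set S}) (Q : {set C * S}),
  #|Q| + #|A| <= n -> GCinst A b X Y Q ->
  \sum_(l in A) (#|X l| + #|Y l| - b l) <= #|Q|.

Lemma peel_step n (IH : GC_upto n) (I C S : finType) (A : {set I}) (b : I -> nat)
    (X : I -> {set C}) (Y : I -> {set S}) (Q : {set C * S}) l0 :
  #|Q| + #|A| <= n.+1 -> GCinst A b X Y Q -> l0 \in A ->
  (forall l, l \in A -> 0 < #|X l| + #|Y l| - b l) ->
  #|A| <= #|Y l0| ->
  \sum_(l in A) (#|X l| + #|Y l| - b l) <= #|Q|.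
Proof.
move=> Hn [Hsz HQ HW] l0A Hpos HA.
have [hx0 hy0] := Hsz l0 l0A.
have : 0 < #|X l0| by have := Hpos l0 l0A; lia.
case/card_gt0P => j jX.
set B := [set p : C * S | p.1 == j].
set Q' := Q :\: B.
have HQQ : #|Q :&: B| + #|Q'| = #|Q| by rewrite cardsID.
have HQj : #|Y l0| <= #|Q :&: B|.
  rewrite -(card_imset (mem (Y l0)) (fun (k1 k2 : S) (e : (j,k1) = (j,k2)) => f_equal snd e)).
  apply: subset_leq_card; apply/subsetP => p /imsetP [k kY ->].
  by rewrite in_setI (HQ l0 j k l0A jX kY) inE eqxx.
have A0 : 0 < #|A| by apply/card_gt0P; exists l0.
have Hn' : #|Q'| + #|A| <= n by lia.
have Hinst : GCinst A b (fun l => X l :\ j) Y Q'.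
  rewrite /GCinst; split=> //.
    move=> l lA; have [h1 h2] := Hsz l lA; split=> //.
    by apply: leq_trans h1; apply: subset_leq_card; apply: subD1set.
  move=> l j' k lA; rewrite in_setD1 => /andP[jj' j'X] kY.
  by rewrite in_setD (HQ l j' k lA j'X kY) andbT /B inE /= jj'.
have IH' : \sum_(l in A) (#|X l :\ j| + #|Y l| - b l) <= #|Q'| := IH _ _ _ _ _ _ _ _ Hn' Hinst.
have Hrow : forall l, l \in A ->
    #|X l| + #|Y l| - b l <= (#|X l :\ j| + #|Y l| - b l) + 1.
  by move=> l _; have := cardsD1 j (X l); lia.
have Hs : \sum_(l in A) (#|X l| + #|Y l| - b l) <=
          \sum_(l in A) ((#|X l :\ j| + #|Y l| - b l) + 1) by apply: leq_sum.
apply: (leq_trans Hs).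
rewrite big_split /= sum1_card.
move: IH' HQQ HQj HA. set s1 := \sum_(i in A) _. set q := #|Q|. set q' := #|Q'|. set qb := #|Q :&: B|. lia.
Qed.

Lemma dist_lemma (I : finType) (T : {set I}) (cap : I -> nat) t :
  t <= \sum_(i in T) cap i ->
  exists d : I -> nat, [/\ forall l, d l <= cap l, forall l, l \notin T -> d l = 0 &
     \sum_(i in T) d i = t].
Proof.
elim: t => [|t IH] Ht.
  exists (fun _ => 0); split=> //; exact: big1.
have [d [dc d0 ds]] := IH (ltnW Ht).
have : exists2 l, l \in T & d l < cap l.
  case: (boolP [exists l in T, d l < cap l]) => [/exists_inP [l lT dl]|/exists_inPn H].
    by exists l.
  have : \sum_(i in T) cap i <= \sum_(i in T) d i.
    by apply: leq_sum => i iT; have := H i iT; rewrite -leqNgt.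
  lia.
case=> l lT dl.
exists (fun i => if i == l then d i + 1 else d i); split.
- by move=> i; case: eqP => [->|_]; [lia | apply: dc].
- by move=> i iT; case: eqP => [e|_]; [rewrite e lT in iT | apply: d0].
- rewrite (big_setD1 _ lT) /= eqxx; rewrite (big_setD1 _ lT) /= in ds.
  have -> : \sum_(i in T :\ l) (if i == l then d i + 1 else d i) = \sum_(i in T :\ l) d i.
    by apply: eq_bigr => i; rewrite in_setD1 => /andP[/negbTE -> _].
  lia.
Qed.

Lemma core_gc n : GC_upto n.
Proof.
elim: n => [|n IH] I C S A b X Y Q Hn Hinst.
  have A0 : A = set0 by apply/eqP; rewrite -cards_eq0; lia.
  by rewrite A0 big_set0.
have [Hsz HQ HW] := Hinst.
case: (pickP [pred l in A | #|X l| + #|Y l| - b l == 0]) => [l1 /andP[l1A /eqP t0] | Hpos0].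
  rewrite (big_setD1 _ l1A) /= t0 add0n.
  apply: IH.
    by have := cardsD1 l1 A; rewrite l1A; lia.
  rewrite /GCinst; split.
  - by move=> l /setD1P [_ lA]; apply: Hsz.
  - by move=> l j k /setD1P [_ lA]; apply: HQ.
  - by apply: wideOn_sub HW (subD1set _ _).
have Hpos : forall l, l \in A -> 0 < #|X l| + #|Y l| - b l.
  by move=> l lA; have := Hpos0 l; rewrite /= lA /=; lia.
case: (boolP (A == set0)) => [/eqP -> | /set0Pn [i0 i0A]].
  by rewrite big_set0.
have A0 : 0 < #|A| by apply/card_gt0P; exists i0.
set F := fun l => maxn #|X l| #|Y l|.
have [l0 l0A HM0] := eq_bigmax_cond F A0.
pose M := \max_(l in A) F l.
have HM : M = F l0 by exact: HM0.
have FM : forall l, l \in A -> F l <= M by move=> l lA; apply: leq_bigmax_cond.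
case: (leqP #|A| M) => hAM.
  case: (leqP #|X l0| #|Y l0|) => hxy.
    apply: (peel_step IH Hn Hinst l0A Hpos).
    by move: hAM; rewrite HM /F; lia.
  set Qt := [set (p.2, p.1) | p in Q].
  have inj_sw : injective (fun p : C * S => (p.2, p.1)) by move=> [? ?] [? ?] [-> ->].
  have cQt : #|Qt| = #|Q| by rewrite card_imset.
  have Hinst' : GCinst A b Y X Qt.
    rewrite /GCinst; split=> //.
      by move=> l lA; have [h1 h2] := Hsz l lA.
    move=> l k j lA kY jX; apply/imsetP; exists (j,k) => //; exact: (HQ l j k lA jX kY).
  have := peel_step IH (n:=n) (Q:=Qt) (X:=Y) (Y:=X) (b:=b) (A:=A) (l0:=l0).
  rewrite cQt; move=> /(_ Hn Hinst' l0A) H.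
  have e : \sum_(l in A) (#|X l| + #|Y l| - b l) = \sum_(l in A) (#|Y l| + #|X l| - b l).
    by apply: eq_bigr => l _; rewrite addnC.
  rewrite e; apply: H.
    by move=> l lA; rewrite addnC; apply: Hpos.
  by move: hAM; rewrite HM /F; lia.
pose w := [arg min_(i < l0 in A) b i].
have [wA bmin] : w \in A /\ forall l, l \in A -> b w <= b l.
  by rewrite /w; case: arg_minnP => // v vA vmin; split.
have cAw : M <= #|A :\ w| by have := cardsD1 w A; rewrite wA; lia.
have [T /andP[sT /eqP cT] _] := topk (fun _ => 0) (A :\ w) M.
rewrite (minn_idPl cAw) in cT.
have wT : w \notin T by apply/negP => /(subsetP sT); rewrite in_setD1 eqxx.
have TA : T \subset A by apply: subset_trans sT (subD1set _ _).
have wTA : w |: T \subset A by rewrite subUset sub1set wA TA.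
have [T0 /andP[sT0 cT0] H0] := HW _ wTA M.
have [T1 /andP[sT1 cT1] H1] := swap_lemma wT sT0 cT0 (eq_leq (esym cT))
   (fun x xT => bmin x (subsetP TA x xT)).
have H2 := sum_sub_le b sT1.
rewrite big_setU1 //= in H0.
set cap := fun l => b l - F l.
have Hcap : \sum_(i in T) (b i - minn (b i) M) <= \sum_(i in T) cap i.
  apply: leq_sum => i iT; rewrite /cap; have := FM i (subsetP TA i iT); lia.
have Hsplit : \sum_(i in T) (b i - minn (b i) M) + \sum_(i in T) minn (b i) M = \sum_(i in T) b i.
  by rewrite -big_split /=; apply: eq_bigr => i _; rewrite subnK // geq_minl.
have [hxw hyw] := Hsz w wA.
have Fw := FM w wA.
have tw : #|X w| + #|Y w| - b w <= minn (b w) M by move: Fw; rewrite /F; lia.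
have Htd : #|X w| + #|Y w| - b w <= \sum_(i in T) cap i by lia.
have [d [dc d0 ds]] := dist_lemma Htd.
have dA : \sum_(i in A :\ w) d i = \sum_(i in T) d i.
  rewrite (big_setID T) /= (setIidPr sT) [X in _ + X]big1 ?addn0 //.
  by move=> i; rewrite in_setD => /andP[iT _]; apply: d0.
have db : forall l, d l <= b l by move=> l; apply: leq_trans (dc l) _; rewrite /cap leq_subr.
have Hinst2 : GCinst (A :\ w) (fun l => b l - d l) X Y Q.
  rewrite /GCinst; split.
  - move=> l /setD1P [_ lA]; have [h1 h2] := Hsz l lA; have := dc l; have := FM l lA.
    by rewrite /cap /F; lia.
  - by move=> l j k /setD1P [_ lA]; apply: HQ.
  - apply: any_wide => //.
    by rewrite dA ds; apply: leq_trans tw _; apply: geq_minl.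
have Hn2 : #|Q| + #|A :\ w| <= n by have := cardsD1 w A; rewrite wA; lia.
have IH2 : \sum_(l in A :\ w) (#|X l| + #|Y l| - (b l - d l)) <= #|Q| := IH _ _ _ _ _ _ _ _ Hn2 Hinst2.
rewrite (big_setD1 _ wA) /=.
have e : \sum_(l in A :\ w) (#|X l| + #|Y l| - (b l - d l)) =
         \sum_(l in A :\ w) (#|X l| + #|Y l| - b l) + \sum_(l in A :\ w) d l.
  rewrite -big_split /=; apply: eq_bigr => l /setD1P [_ lA].
  have := Hpos l lA; have := db l; lia.
move: IH2; rewrite e dA ds. set s1 := \sum_(l in A :\ w) _. by rewrite addnC.
Qed.


Lemma le_foldr_maxn (Z : seq nat) z : z \in Z -> z <= foldr maxn 0 Z.
Proof.
elim: Z => //= x Z IH; rewrite in_cons => /orP[/eqP ->|/IH h].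
  exact: leq_maxl.
exact: leq_trans h (leq_maxr _ _).
Qed.

Lemma sum_lt_nat K z : \sum_(0 <= j < K) (j < z) = minn z K.
Proof.
elim: K => [|K IH]; first by rewrite big_geq //; lia.
rewrite big_nat_recr //= IH; lia.
Qed.

Lemma conj_take (Z : seq nat) k :
  sumn (take k (conjugate Z)) = \sum_(z <- Z) minn z k.
Proof.
rewrite /conjugate -map_take take_iota sumnE big_map.
set N := foldr maxn 0 Z.
have -> : \sum_(j <- iota 0 (minn k N)) count (fun x => j.+1 <= x) Z =
          \sum_(j <- iota 0 (minn k N)) \sum_(z <- Z) (j < z).
  apply: eq_bigr => j _; rewrite -sum1_count big_mkcond /=.
  by apply: eq_bigr => z _; case: (j < z).
rewrite exchange_big /= [LHS]big_seq [RHS]big_seq.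
apply: eq_bigr => z zZ.
have := le_foldr_maxn zZ; rewrite -/N => zN.
have -> : iota 0 (minn k N) = index_iota 0 (minn k N) by rewrite /index_iota subn0.
by rewrite sum_lt_nat; lia.
Qed.

Lemma wide_WideOn (a : seq nat) :
  wide a -> WideOn [set: 'I_(size a)] (fun i => nth 0 a i).
Proof.
move=> Hw X _ k.
case: k => [|k].
  exists set0; first by rewrite sub0set cards0.
  by rewrite big1 // => i _; rewrite minn0.
set f := fun i : 'I_(size a) => nth 0 a i.
set msk := [seq i \in X | i <- enum 'I_(size a)].
have ea : a = [seq f i | i <- enum 'I_(size a)].
  have h : map (nth 0 a \o @nat_of_ord (size a)) (enum 'I_(size a)) = a.
    by rewrite map_comp val_enum_ord -/(mkseq (nth 0 a) (size a)) mkseq_nth.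
  by rewrite -{1}h.
have eZ : mask msk a = [seq f i | i <- enum X].
  rewrite [X in mask _ X]ea -map_mask /msk -filter_mask.
  by congr map; rewrite enumT.
have [_ Hd] := Hw msk.
have := Hd k.+1 (ltn0Sn _).
rewrite conj_take eZ -map_take sumnE !big_map big_enum /=.
set s := take k.+1 (enum X).
have us : uniq s by apply: take_uniq; apply: enum_uniq.
move=> H.
exists [set i in s].
  apply/andP; split.
    by apply/subsetP => i; rewrite inE => /mem_take; rewrite mem_enum.
  rewrite cardsE; move/card_uniqP: us => ->; rewrite size_take; by case: ifP => // /negbT; rewrite -leqNgt.
apply: leq_trans H _.
rewrite big_uniq //; apply: eq_leq; apply: eq_bigl => i; by rewrite inE.
Qed.


Lemma set2C' (T : finType) (x y : T) : [set x; y] = [set y; x].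
Proof. by apply/setP => t; rewrite !in_set2 orbC. Qed.

Lemma pair_sub3 (T : finType) (x y z : T) (p : {set T}) :
  p \subset [set x; y; z] -> #|p| = 2 ->
  [\/ p = [set x; y], p = [set x; z] | p = [set y; z]].
Proof.
move=> sp /eqP /cards2P [u [v [uv ep]]].
have uin : u \in [set x; y; z] by apply: (subsetP sp); rewrite ep in_set2 eqxx.
have vin : v \in [set x; y; z] by apply: (subsetP sp); rewrite ep in_set2 eqxx orbT.
move: uin vin; rewrite !inE.
have H3 : forall t, (t == x) || (t == y) || (t == z) -> [\/ t = x, t = y | t = z].
  move=> t; case: eqP => [->|_]; first by constructor 1.
  case: eqP => [->|_]; first by constructor 2.
  by move/eqP; constructor 3.
move=> /H3 hu /H3 hv.
case: hu => eu; case: hv => ev; subst; rewrite ?eqxx in uv => //.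
- by constructor 1.
- by constructor 2.
- by constructor 1; rewrite set2C'.
- by constructor 3.
- by constructor 2; rewrite set2C'.
- by constructor 3; rewrite set2C'.
Qed.

Lemma card_lt_ord n b : b <= n -> #|[set j : 'I_n | j < b]| = b.
Proof.
move=> bn.
transitivity (\sum_(0 <= j < n) (j < b)); last by rewrite sum_lt_nat; lia.
rewrite big_mkord -sum1_card big_mkcond /=.
by apply: eq_bigr => j _; rewrite inE; case: (j < b).
Qed.

Lemma nth_le_head (a : seq nat) i : young a -> nth 0 a i <= head 0 a.
Proof.
move=> ya.
case: (ltnP i (size a)) => hi; last by rewrite nth_default.
case: a ya hi => [|x s] //= ya hi.
have tr : transitive (fun x y : nat => y <= x).
  by move=> u v w h1 h2; apply: leq_trans h2 h1.
have rf : reflexive (fun x y : nat => y <= x) by move=> u.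
have H := sorted_leq_nth tr rf 0 (s := x :: s) ya.
have := H 0 i; rewrite !inE /=; apply => //.
Qed.

Lemma sum_nth (a : seq nat) : \sum_(i < size a) nth 0 a i = sumn a.
Proof. by rewrite sumnE (big_nth 0) big_mkord. Qed.

Section Count.
Variables m n : nat.
Local Notation V := (vert m n).

Definition gpair (z : ('I_m * 'I_n) + ('I_m * 'I_n) + ('I_n * 'I_n)) : {set V} :=
  match z with
  | inl (inl p) => [set rv p.1; cv p.2]
  | inl (inr p) => [set rv p.1; sv p.2]
  | inr p => [set cv p.1; sv p.2]
  end.

Lemma gpair_inj : injective gpair.
Proof.
move=> [[[i j]|[i j]]|[i j]] [[[i' j']|[i' j']]|[i' j']] /setP H;
  rewrite /gpair /= in H.
- move: (H (rv i)) (H (cv j)); rewrite !in_set2 /rv /cv /= !eqxx /= !orbF.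
  by move=> /esym/eqP [->] /esym/eqP [->].
- by move: (H (cv j)); rewrite !in_set2 /rv /cv /sv /= !eqxx.
- by move: (H (rv i)); rewrite !in_set2 /rv /cv /sv /= !eqxx.
- by move: (H (sv j)); rewrite !in_set2 /rv /cv /sv /= !eqxx.
- move: (H (rv i)) (H (sv j)); rewrite !in_set2 /rv /cv /sv /= !eqxx /= !orbF.
  by move=> /esym/eqP [->] /esym/eqP [->].
- by move: (H (rv i)); rewrite !in_set2 /rv /cv /sv /= !eqxx.
- by move: (H (sv j)); rewrite !in_set2 /rv /cv /sv /= !eqxx.
- by move: (H (cv i)); rewrite !in_set2 /rv /cv /sv /= !eqxx.
- move: (H (cv i)) (H (sv j)); rewrite !in_set2 /rv /cv /sv /= !eqxx /= ?orbF.
  by move=> /esym/eqP [->] /esym/eqP [->].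
Qed.

Lemma sum_pairs (F : 'I_m -> {set 'I_n}) :
  \sum_(p : 'I_m * 'I_n | p.2 \in F p.1) 1 = \sum_i #|F i|.
Proof.
rewrite -(pair_big_dep xpredT (fun i j => j \in F i) (fun _ _ => 1)) /=.
by apply: eq_bigr => i _; rewrite sum1_card.
Qed.

Lemma count_pairs (P : {set {set V}}) (FA FB : 'I_m -> {set 'I_n}) :
  (forall i j, j \in FA i -> [set rv i; cv j] \in P) ->
  (forall i k, k \in FB i -> [set rv i; sv k] \in P) ->
  \sum_i #|FA i| + \sum_i #|FB i| +
    #|[set jk : 'I_n * 'I_n | [set cv jk.1; sv jk.2] \in P]| <= #|P|.
Proof.
move=> HA HB.
pose DS := [set z | match z with
                    | inl (inl p) => p.2 \in FA p.1
                    | inl (inr p) => p.2 \in FB p.1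
                    | inr p => [set cv p.1; sv p.2] \in P end].
have sub : gpair @: DS \subset P.
  apply/subsetP => s /imsetP [[[[i j]|[i j]]|[j k]] zD ->]; rewrite inE /= in zD;
    rewrite /gpair /=.
  - exact: HA.
  - exact: HB.
  - exact: zD.
have cD : #|DS| = \sum_i #|FA i| + \sum_i #|FB i| +
    #|[set jk : 'I_n * 'I_n | [set cv jk.1; sv jk.2] \in P]|.
  rewrite -sum1_card big_sumType big_sumType /=.
  rewrite -!sum_pairs -sum1_card.
  congr (_ + _ + _); apply: eq_bigl => [[i j]]; by rewrite !inE.
rewrite -cD -(card_imset _ gpair_inj).
exact: subset_leq_card.
Qed.

End Count.

Lemma lower_bound (a : seq nat) (P : {set {set vert (size a) (width a)}}) :
  young a -> wide a -> is_2cover (HY a) P -> ysize a <= #|P|.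
Proof.
move=> ya wa [Hp Hcov].
pose b := fun i : 'I_(size a) => nth 0 a i.
have bn : forall i, b i <= width a by move=> i; exact: nth_le_head.
pose J := fun i : 'I_(size a) => [set j : 'I_(width a) | j < b i].
have cJ : forall i, #|J i| = b i by move=> i; exact: card_lt_ord.
pose PA := fun i => [set j : 'I_(width a) | [set rv i; cv j] \in P].
pose PB := fun i => [set k : 'I_(width a) | [set rv i; sv k] \in P].
pose X := fun i => J i :\: PA i.
pose Y := fun i => J i :\: PB i.
pose Q := [set jk : 'I_(width a) * 'I_(width a) | [set cv jk.1; sv jk.2] \in P].
have Hinst : GCinst [set: 'I_(size a)] b X Y Q.
  split.
  - move=> i _; rewrite -!cJ; split; apply: subset_leq_card; exact: subsetDl.
  - move=> i j k _; rewrite /X /Y /J /PA /PB /Q !inE => /andP[jPA jJ] /andP[kPB kJ].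
    pose e := [set rv i; cv j; sv k] : {set vert (size a) (width a)}.
    have eH : e \in HY a.
      apply/bigcupP; exists i => //; apply/imsetP; exists (j,k) => //.
      by rewrite inE /= jJ kJ.
    have [p pP pe] := Hcov e eH.
    have [p2 _] := Hp p pP.
    case: (pair_sub3 pe p2) => ep; rewrite ep in pP.
    + by rewrite pP in jPA.
    + by rewrite pP in kPB.
    + exact: pP.
  - exact: wide_WideOn.
have Hc := core_gc (leqnn (#|Q| + #|[set: 'I_(size a)]|)) Hinst.
have HP := count_pairs (FA := fun i => J i :&: PA i) (FB := fun i => J i :&: PB i) (P := P).
have HP' : \sum_i #|J i :&: PA i| + \sum_i #|J i :&: PB i| + #|Q| <= #|P|.
  apply: HP.
  - by move=> i j; rewrite !inE => /andP[_ ->].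
  - by move=> i k; rewrite !inE => /andP[_ ->].
have HX : forall i, #|J i :&: PA i| + #|X i| = b i by move=> i; rewrite cardsID cJ.
have HY : forall i, #|J i :&: PB i| + #|Y i| = b i by move=> i; rewrite cardsID cJ.
have Hrow : forall i : 'I_(size a), b i <= #|J i :&: PA i| + #|J i :&: PB i| + (#|X i| + #|Y i| - b i).
  by move=> i; have := HX i; have := HY i; lia.
rewrite /ysize -sum_nth.
have Hs : \sum_(i < size a) nth 0 a i <=
          \sum_(i < size a) (#|J i :&: PA i| + #|J i :&: PB i| + (#|X i| + #|Y i| - b i)).
  by apply: leq_sum => i _; exact: Hrow.
apply: leq_trans Hs _.
rewrite !big_split /=.
move: Hc HP'.
have -> : \sum_(l in [set: 'I_(size a)]) (#|X l| + #|Y l| - b l) =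
          \sum_(i < size a) (#|X i| + #|Y i| - b i) by apply: eq_bigl => i; rewrite inE.
set s1 := \sum_(i < size a) _. set s2 := \sum_(i < size a) _. set s3 := \sum_(i < size a) _.
set q := #|Q|. set p := #|P|.
lia.
Qed.

Lemma upper_bound (a : seq nat) :
  young a -> exists P, is_2cover (HY a) P /\ #|P| = ysize a.
Proof.
move=> ya.
pose b := fun i : 'I_(size a) => nth 0 a i.
pose D := [set p : 'I_(size a) * 'I_(width a) | p.2 \in [set j : 'I_(width a) | j < b p.1]].
pose f := fun p : 'I_(size a) * 'I_(width a) =>
            [set rv p.1; cv p.2] : {set vert (size a) (width a)}.
have finj : injective f.
  move=> p q e.
  have : gpair (inl (inl p)) = gpair (inl (inl q)) by exact: e.
  by move/gpair_inj => [].
exists (f @: D); split; last first.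
  rewrite card_imset // -sum1_card.
  have -> : \sum_(p in D) 1 = \sum_(p : 'I_(size a) * 'I_(width a) |
              p.2 \in [set j : 'I_(width a) | j < b p.1]) 1.
    by apply: eq_bigl => p; rewrite inE.
  rewrite (sum_pairs (fun i : 'I_(size a) => [set j : 'I_(width a) | j < b i])) /ysize -sum_nth.
  by apply: eq_bigr => i _; rewrite card_lt_ord //; exact: nth_le_head.
split.
- move=> p /imsetP [[i j] pD ->]; rewrite !inE /= in pD.
  split; first by rewrite /f cards2.
  exists [set rv i; cv j; sv j].
    apply/bigcupP; exists i => //; apply/imsetP; exists (j,j) => //.
    by rewrite inE /= pD.
  by apply/subsetP => x; rewrite /f /= !inE => /orP[->|->]; rewrite ?orbT.
- move=> e /bigcupP [i _ /imsetP [[j k] jk ->]]; rewrite inE /= in jk.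
  case/andP: jk => jb kb.
  exists (f (i, j)).
    by apply/imsetP; exists (i,j) => //; rewrite !inE.
  by apply/subsetP => x; rewrite /f /= !inE => /orP[->|->]; rewrite ?orbT.
Qed.

Theorem theorem2 (a : seq nat) :
  young a -> wide a -> tau2_is (HY a) (ysize a).
Proof.
move=> ya wa; split; first exact: upper_bound.
by move=> P HP; apply: lower_bound.
Qed.
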